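(* Let $\mathcal{D}$ be a category with all pullbacks, and let $\mathcal{C}$ be a full subcategory of $\mathcal{D}$ that is equal to its essential image (closed under isomorphism), with the property that for any object $A$ of $\mathcal{C}$ and any object $B$ of $\mathcal{D}$, if $\mathrm{Hom}_{\mathcal{D}}(B,A)\neq\varnothing$ then $B$ is in $\mathcal{C}$. Let $\mathcal{D}'$ be the full subcategory of $\mathcal{D}$ on the objects not in $\mathcal{C}$. Then $\mathrm{Tw}(\mathcal{D}')$ has all pullbacks.
   Context: For a category $\mathcal{D}$, the Grothendieck twist $\mathrm{Tw}(\mathcal{D})$ is the category whose objects are finite families $\{a_i\}_{i\in I}$ ($I$ a finite set, each $a_i$ an object of $\mathcal{D}$), and whose morphisms $\{a_i\}_{i\in I}\to\{b_j\}_{j\in J}$ are pairs consisting of a function $f:I\to J$ and morphisms $F_i:a_i\to b_{f(i)}$ in $\mathcal{D}$ for all $i\in I$; composition composes set maps and components. *)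

(* Defs.v *)
From mathcomp Require Import all_boot.
From Stdlib Require Import FunctionalExtensionality.
Set Implicit Arguments. Unset Strict Implicit. Unset Printing Implicit Defensive.

Record Category := {
  Ob :> Type;
  Hom : Ob -> Ob -> Type;
  idm : forall x, Hom x x;
  comp : forall x y z, Hom y z -> Hom x y -> Hom x z;
  comp_assoc : forall x y z w (h : Hom z w) (g : Hom y z) (f : Hom x y),
      comp h (comp g f) = comp (comp h g) f;
  comp_id_l : forall x y (f : Hom x y), comp (idm y) f = f;
  comp_id_r : forall x y (f : Hom x y), comp f (idm x) = f }.

Arguments Hom {C} : rename.
Arguments idm {C} : rename.
Arguments comp {C x y z} : rename.

Definition isomorphic (C : Category) (x y : C) : Prop :=
  exists (f : Hom x y) (g : Hom y x), comp g f = idm x /\ comp f g = idm y.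

Definition is_pullback (C : Category) (X Y Z : C) (f : Hom X Z) (g : Hom Y Z)
    (P : C) (p1 : Hom P X) (p2 : Hom P Y) : Prop :=
  comp f p1 = comp g p2 /\
  forall (Q : C) (q1 : Hom Q X) (q2 : Hom Q Y), comp f q1 = comp g q2 ->
    exists! u : Hom Q P, comp p1 u = q1 /\ comp p2 u = q2.

Definition has_pullbacks (C : Category) : Prop :=
  forall (X Y Z : C) (f : Hom X Z) (g : Hom Y Z),
    exists (P : C) (p1 : Hom P X) (p2 : Hom P Y), is_pullback f g p1 p2.

Definition FullSub (D : Category) (P : D -> Prop) : Category :=
  {| Ob := {x : D | P x};
     Hom := fun x y => Hom (proj1_sig x) (proj1_sig y);
     idm := fun x => idm (proj1_sig x);
     comp := fun x y z g f => comp g f;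
     comp_assoc := fun x y z w h g f => comp_assoc h g f;
     comp_id_l := fun x y f => comp_id_l f;
     comp_id_r := fun x y f => comp_id_r f |}.

(* Grothendieck twist Tw(D): objects are finite families {a_i}_{i in I},
   I a finite set (a finType); morphisms are a map f : I -> J with
   components F_i : a_i -> b_{f i}. *)
Record TwOb (D : Category) := TwFam { tw_idx : finType; tw_fam : tw_idx -> D }.
Arguments tw_idx {D} A : rename.
Arguments tw_fam {D} A i : rename.

Record TwHom (D : Category) (A B : TwOb D) := TwMor {
  tw_map : tw_idx A -> tw_idx B;
  tw_cmp : forall i, Hom (tw_fam A i) (tw_fam B (tw_map i)) }.
Arguments tw_map {D A B} F i : rename.
Arguments tw_cmp {D A B} F i : rename.

Definition tw_id (D : Category) (A : TwOb D) : TwHom A A :=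
  @TwMor D A A (fun i => i) (fun i => idm (tw_fam A i)).

Definition tw_comp (D : Category) (A B C : TwOb D)
    (G : TwHom B C) (F : TwHom A B) : TwHom A C :=
  @TwMor D A C (fun i => tw_map G (tw_map F i))
    (fun i => comp (tw_cmp G (tw_map F i)) (tw_cmp F i)).

Lemma tw_comp_assoc (D : Category) (A B C E : TwOb D)
  (H : TwHom C E) (G : TwHom B C) (F : TwHom A B) :
  tw_comp H (tw_comp G F) = tw_comp (tw_comp H G) F.
Proof.
rewrite /tw_comp /=; f_equal; apply: functional_extensionality_dep => i.
exact: comp_assoc.
Qed.

Lemma tw_comp_id_l (D : Category) (A B : TwOb D) (F : TwHom A B) :
  tw_comp (tw_id B) F = F.
Proof.
case: F => f F; rewrite /tw_comp /=; f_equal.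
apply: functional_extensionality_dep => i; exact: comp_id_l.
Qed.

Lemma tw_comp_id_r (D : Category) (A B : TwOb D) (F : TwHom A B) :
  tw_comp F (tw_id A) = F.
Proof.
case: F => f F; rewrite /tw_comp /=; f_equal.
apply: functional_extensionality_dep => i; exact: comp_id_r.
Qed.

Definition Tw (D : Category) : Category :=
  {| Ob := TwOb D; Hom := @TwHom D; idm := @tw_id D; comp := @tw_comp D;
     comp_assoc := @tw_comp_assoc D; comp_id_l := @tw_comp_id_l D;
     comp_id_r := @tw_comp_id_r D |}.

(* Main.v *)
Require Import Defs.
From mathcomp Require Import all_boot.
From Stdlib Require Import Classical ClassicalEpsilon FunctionalExtensionality Eqdep.
Set Implicit Arguments. Unset Strict Implicit. Unset Printing Implicit Defensive.
Local Notation comp := Defs.comp.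

Lemma tw_hom_ext (E : Category) (A B : TwOb E) (F G : TwHom A B) :
  (forall i, existT (fun b => Hom (tw_fam A i) (tw_fam B b)) (tw_map F i) (tw_cmp F i)
           = existT (fun b => Hom (tw_fam A i) (tw_fam B b)) (tw_map G i) (tw_cmp G i)) -> F = G.
Proof.
case: F => fm fc; case: G => gm gc /= H.
have e : fm = gm by apply: functional_extensionality => i; exact: (f_equal (@projT1 _ _) (H i)).
subst gm; f_equal; apply: functional_extensionality_dep => i; exact: inj_pair2 (H i).
Qed.

Lemma tw_hom_pt (E : Category) (A B : TwOb E) (F G : TwHom A B) : F = G ->
  (forall i, existT (fun b => Hom (tw_fam A i) (tw_fam B b)) (tw_map F i) (tw_cmp F i)
           = existT (fun b => Hom (tw_fam A i) (tw_fam B b)) (tw_map G i) (tw_cmp G i)).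
Proof. by move->. Qed.

Definition tr (E : Category) (J : Type) (c : J -> E) (X : E) (x y : J) (e : x = y) :
  Hom X (c y) -> Hom X (c x) :=
  match e in _ = y0 return Hom X (c y0) -> Hom X (c x) with erefl => id end.

Lemma tr_existT (E : Category) (J : Type) (c : J -> E) (X : E) (x y : J) (e : x = y)
  (h : Hom X (c y)) :
  existT (fun z => Hom X (c z)) x (tr e h) = existT (fun z => Hom X (c z)) y h.
Proof. by move: h; case: y / e. Qed.

Lemma tr_comp (E : Category) (J : Type) (c : J -> E) (X Y : E) (x y : J) (e : x = y)
  (g : Hom Y (c y)) (h : Hom X Y) : tr e (comp g h) = comp (tr e g) h.
Proof. by move: g; case: y / e. Qed.

Lemma existT_tr (E : Category) (J : Type) (c : J -> E) (X : E) (x y : J)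
  (h1 : Hom X (c x)) (h2 : Hom X (c y)) :
  existT (fun z => Hom X (c z)) x h1 = existT (fun z => Hom X (c z)) y h2 ->
  forall e : x = y, h1 = tr e h2.
Proof. move=> H e; move: h2 H; case: y / e => h2 H; exact: inj_pair2 H. Qed.

Definition get (X : Type) (o : option X) : isSome o -> X :=
  match o as o0 return isSome o0 -> X with
  | Some x => fun _ => x
  | None => fun h => False_rect X (notF h) end.

Section Pb.
Variables (D : Category) (inC : D -> Prop).
Hypothesis hpb : has_pullbacks D.
Hypothesis hC : forall (A B : D), inC A -> Hom B A -> inC B.
Local Notation E := (FullSub (fun x : D => ~ inC x)).
Variables (A B Cc : TwOb E) (F : TwHom A Cc) (G : TwHom B Cc).

Definition PBt (p : tw_idx A * tw_idx B) :=
  {P : E & (Hom P (tw_fam A p.1) * Hom P (tw_fam B p.2))%type}.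

Definition spec (p : tw_idx A * tw_idx B) (s : option (PBt p)) : Prop :=
  match s with
  | Some x => exists e : tw_map F p.1 = tw_map G p.2,
      @is_pullback D _ _ _ (tw_cmp F p.1) (@tr E _ (tw_fam Cc) _ _ _ e (tw_cmp G p.2))
        (proj1_sig (projT1 x)) (projT2 x).1 (projT2 x).2
  | None => forall (e : tw_map F p.1 = tw_map G p.2) (P : D) p1 p2,
      @is_pullback D _ _ _ (tw_cmp F p.1) (@tr E _ (tw_fam Cc) _ _ _ e (tw_cmp G p.2))
        P p1 p2 -> inC P
  end.

Lemma dex p : exists s, spec (p := p) s.
Proof.
case: (classic (exists (e : tw_map F p.1 = tw_map G p.2) (P : D) p1 p2,
      @is_pullback D _ _ _ (tw_cmp F p.1) (@tr E _ (tw_fam Cc) _ _ _ e (tw_cmp G p.2))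
        P p1 p2 /\ ~ inC P)).
- move=> [e [P [p1 [p2 [hp hn]]]]].
  exists (Some (existT _ (exist _ P hn) (p1, p2))); exists e; exact hp.
- move=> H; exists None => e P p1 p2 hp; apply: NNPP => hn; apply: H.
  by exists e, P, p1, p2.
Qed.

Definition d p : option (PBt p) := proj1_sig (constructive_indefinite_description _ (dex p)).
Lemma dspec p : spec (d p). Proof. exact: proj2_sig (constructive_indefinite_description _ (dex p)). Qed.

Lemma get_spec p (h : isSome (d p)) : spec (Some (get h)).
Proof.
have := dspec p; move: h; case: (d p) => //.
Qed.

Definition K : finType := {p : tw_idx A * tw_idx B | isSome (d p)}.

Definition PbOb : TwOb E := @TwFam E K (fun k : K => projT1 (get (valP k))).
Definition pr1 : TwHom PbOb A :=
  @TwMor E PbOb A (fun k : K => (val k).1) (fun k : K => (projT2 (get (valP k))).1).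
Definition pr2 : TwHom PbOb B :=
  @TwMor E PbOb B (fun k : K => (val k).2) (fun k : K => (projT2 (get (valP k))).2).

Lemma pb_exists : exists (P : Tw E) (p1 : Hom P A) (p2 : Hom P B),
  is_pullback (C := Tw E) F G p1 p2.
Proof.
exists PbOb, pr1, pr2; split.
  apply: tw_hom_ext => k /=.
  have [e [hc _]] := get_spec (valP k).
  rewrite -(tr_existT e) tr_comp; apply: f_equal; exact: hc.
move=> Q q1 q2 hq.
have hk := tw_hom_pt hq.
have eqk : forall k, tw_map F (tw_map q1 k) = tw_map G (tw_map q2 k).
  by move=> k; exact: (f_equal (@projT1 _ _) (hk k)).
have comm : forall k e, comp (C := E) (tw_cmp F (tw_map q1 k)) (tw_cmp q1 k) =
    comp (tr e (tw_cmp G (tw_map q2 k))) (tw_cmp q2 k).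
  by move=> k e; rewrite -tr_comp; exact: existT_tr (hk k) e.
have Hk : forall k, isSome (d (tw_map q1 k, tw_map q2 k)).
  move=> k; case hs: (d _) => [s|] //.
  have := dspec (tw_map q1 k, tw_map q2 k); rewrite hs /= => hN.
  exfalso.
  have [P [p1 [p2 hpb']]] := hpb (tw_cmp F (tw_map q1 k))
     (@tr E _ (tw_fam Cc) _ _ _ (eqk k) (tw_cmp G (tw_map q2 k))).
  have hP := hN (eqk k) P p1 p2 hpb'.
  case: hpb' => _ /(_ (proj1_sig (tw_fam Q k)) (tw_cmp q1 k) (tw_cmp q2 k) (comm k (eqk k))) [u _].
  exact: (proj2_sig (tw_fam Q k)) (hC hP u).
pose umap (k : tw_idx Q) : K := exist _ (tw_map q1 k, tw_map q2 k) (Hk k).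
have uex : forall k, exists u : Hom (C := E) (tw_fam Q k) (tw_fam PbOb (umap k)),
    (comp (C := E) (tw_cmp pr1 (umap k)) u = tw_cmp q1 k /\
     comp (C := E) (tw_cmp pr2 (umap k)) u = tw_cmp q2 k) /\
    forall u', (comp (C := E) (tw_cmp pr1 (umap k)) u' = tw_cmp q1 k /\
     comp (C := E) (tw_cmp pr2 (umap k)) u' = tw_cmp q2 k) -> u = u'.
  move=> k; have [e [_ hU]] := get_spec (valP (umap k)).
  exact: hU (proj1_sig (tw_fam Q k)) (tw_cmp q1 k) (tw_cmp q2 k) (comm k e).
pose uc k := proj1_sig (constructive_indefinite_description _ (uex k)).
have ucP k := proj2_sig (constructive_indefinite_description _ (uex k)).
exists (@TwMor E Q PbOb umap uc); split.
  split; apply: tw_hom_ext => k /=.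
    apply: f_equal; exact: (ucP k).1.1.
  apply: f_equal; exact: (ucP k).1.2.
move=> u' [h1 h2]; apply: tw_hom_ext => k /=.
have h1k := tw_hom_pt h1 k; have h2k := tw_hom_pt h2 k.
have e1 := f_equal (@projT1 _ _) h1k; have e2 := f_equal (@projT1 _ _) h2k.
simpl in e1, e2.
have em : tw_map u' k = umap k.
  apply: val_inj => /=; rewrite -e1 -e2; exact: surjective_pairing.
clear e1 e2; simpl in h1k, h2k; move: h1k h2k; move: (tw_cmp u' k); move: em; move: (tw_map u' k) => m em c h1k h2k; subst m.
have c1 := inj_pair2 _ _ _ _ _ h1k; have c2 := inj_pair2 _ _ _ _ _ h2k.
have hh := (ucP k).2 c (conj c1 c2). by rewrite /uc hh.
Qed.
End Pb.

Theorem mainTheorem4 (D : Category) (inC : D -> Prop) :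
  has_pullbacks D ->
  (forall A B : D, inC A -> isomorphic A B -> inC B) ->
  (forall (A B : D), inC A -> Hom B A -> inC B) ->
  has_pullbacks (Tw (FullSub (fun x : D => ~ inC x))).
Proof.
move=> hpb _ hC X Y Z f g; exact: pb_exists.
Qed.
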